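(* For every connected graph $H$ with at least two vertices, $m(H)\ge 2^{\lfloor k'(H)/2\rfloor}$, where $k'(H)$ is the edge connectivity of $H$.
   Context: All graphs are finite and simple. The edge connectivity $k'(H)$ is the minimum number of edges whose removal disconnects $H$. For graphs $G_1=(V,E_1)$, $G_2=(V,E_2)$, their symmetric difference is $(V,E_1\oplus E_2)$, where $E_1\oplus E_2$ is the set of edges in exactly one of $E_1,E_2$. A connectivity code for $H=(V,E)$ is a collection of distinct spanning subgraphs $(V,E')$, $E'\subseteq E$, such that the symmetric difference of any two distinct members is a connected graph on $V$; $m(H)$ is the maximum cardinality of a connectivity code for $H$. *)

(* Defs.v *)
From mathcomp Require Import all_boot.
Set Implicit Arguments. Unset Strict Implicit. Unset Printing Implicit Defensive.

(* A finite simple graph on vertex type V is given by its edge set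
   E : {set {set V}}, every edge being a 2-element subset of V. *)
Definition simple_graph (V : finType) (E : {set {set V}}) : Prop :=
  forall e, e \in E -> #|e| = 2.

Definition adj (V : finType) (E : {set {set V}}) : rel V :=
  fun x y => (x != y) && ([set x; y] \in E).

Definition connectedb (V : finType) (E : {set {set V}}) : bool :=
  [forall x, forall y, connect (adj E) x y].

Definition edge_conn (V : finType) (E : {set {set V}}) : nat :=
  \big[minn/#|E|]_(S in powerset E | ~~ connectedb (E :\: S)) #|S|.

Definition symdiff (V : finType) (A B : {set {set V}}) : {set {set V}} :=
  (A :\: B) :|: (B :\: A).

(* connectivity code: a family of spanning subgraphs (edge subsets of E),
   distinct by construction as a set, whose pairwise symmetric differences
   are connected graphs on V *)
Definition conn_code (V : finType) (E : {set {set V}})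
    (C : {set {set {set V}}}) : bool :=
  [forall F in C, F \subset E] &&
  [forall F1 in C, forall F2 in C, (F1 != F2) ==> connectedb (symdiff F1 F2)].

Definition m_code (V : finType) (E : {set {set V}}) : nat :=
  \max_(C : {set {set {set V}}} | conn_code E C) #|C|.

(* Main.v *)
Require Import Defs.
From mathcomp Require Import all_boot zify.
Set Implicit Arguments. Unset Strict Implicit. Unset Printing Implicit Defensive.

Section Graph.
Variable V : finType.
Implicit Types (H K F : {set {set V}}) (x y a b u v : V).

Definition cn H := connect (adj H).

Lemma adj_sym H : symmetric (adj H).
Proof. by move=> x y; rewrite /adj eq_sym setUC. Qed.

Lemma cn_sym H x y : cn H x y = cn H y x.
Proof. exact: (sym_connect_sym (adj_sym H)). Qed.

Lemma cn_trans H x y z : cn H x y -> cn H y z -> cn H x z.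
Proof. exact: connect_trans. Qed.

Lemma cn_edge H x y : x != y -> [set x; y] \in H -> cn H x y.
Proof. by move=> nxy e; apply: connect1; rewrite /adj nxy. Qed.

Lemma cn_mono H K x y : H \subset K -> cn H x y -> cn K x y.
Proof.
move=> sHK; apply: connect_sub => a b; rewrite /adj => /andP[nab e].
by apply: connect1; rewrite /adj nab (subsetP sHK).
Qed.

Lemma cn_ind (r : rel V) (P : V -> Prop) a :
  P a -> (forall b c, P b -> r b c -> P c) -> forall b, connect r a b -> P b.
Proof.
move=> Pa IH b /connectP[p]; elim: p a Pa => [|c p IHp] a Pa /=; first by move=> _ ->.
by case/andP=> rac pth eb; apply: (IHp c (IH _ _ Pa rac) pth eb).
Qed.

Lemma in2E x y z : (z \in [set x; y]) = (z == x) || (z == y).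
Proof. by rewrite !inE. Qed.

Lemma set2_eq x y b c : b != c -> [set b; c] = [set x; y] ->
  (b = x /\ c = y) \/ (b = y /\ c = x).
Proof.
move=> nbc E2.
have hb : b \in [set x; y] by rewrite -E2 !inE eqxx.
have hc : c \in [set x; y] by rewrite -E2 !inE eqxx orbT.
move: hb hc nbc; rewrite !inE => /orP[]/eqP-> /orP[]/eqP->; rewrite ?eqxx //; by auto.
Qed.

Lemma add_edge K x y a b0 : cn ([set x; y] |: K) a b0 ->
  cn K a b0 \/ (cn K a x /\ cn K y b0) \/ (cn K a y /\ cn K x b0).
Proof.
move=> h; apply: (@cn_ind _ (fun b => cn K a b \/ (cn K a x /\ cn K y b) \/ (cn K a y /\ cn K x b)) a _ _ b0 h).
  by left; apply: connect0.
move=> {h} b' c IH; rewrite /adj => /andP[nbc]; rewrite in_setU1 => /orP[/eqP E2|ebc].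
  case: (set2_eq nbc E2) => -[-> ->] in IH *.
    case: IH => [h|[[h1 h2]|[h1 h2]]].
    - by right; left; split=> //; apply: connect0.
    - by right; left; split=> //; apply: connect0.
    - by left.
  case: IH => [h|[[h1 h2]|[h1 h2]]].
  - by right; right; split=> //; apply: connect0.
  - by left.
  - by right; right; split=> //; apply: connect0.
have hbc : cn K b' c by apply: cn_edge.
case: IH => [h|[[h1 h2]|[h1 h2]]].
- by left; apply: cn_trans hbc.
- by right; left; split=> //; apply: cn_trans hbc.
- by right; right; split=> //; apply: cn_trans hbc.
Qed.


Definition pairs H := forall g, g \in H -> exists x y, x != y /\ g = [set x; y].

Definition forest H : bool :=
  [forall g in H, forall a, forall b, ((g == [set a; b]) && (a != b)) ==> ~~ cn (H :\ g) a b].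

Lemma forestE H g a b : forest H -> g \in H -> g = [set a; b] -> a != b -> ~~ cn (H :\ g) a b.
Proof.
move=> /forall_inP/(_ g) fH gH ge nab; move/(_ gH)/forallP/(_ a)/forallP/(_ b): fH.
by rewrite ge eqxx nab.
Qed.

Lemma forestI H : (forall g a b, g \in H -> g = [set a; b] -> a != b -> ~~ cn (H :\ g) a b) ->
  forest H.
Proof.
move=> h; apply/forall_inP=> g gH; apply/forallP=> a; apply/forallP=> b.
by apply/implyP=> /andP[/eqP ge nab]; apply: h.
Qed.

Lemma forest_sub H K : K \subset H -> forest H -> forest K.
Proof.
move=> sKH fH; apply: forestI => g a b gK ge nab; apply/negP=> c.
have := forestE fH (subsetP sKH _ gK) ge nab; rewrite (cn_mono _ c) //.
by apply: setSD.
Qed.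

Lemma forest_add H x y : forest H -> x != y -> ~~ cn H x y -> forest ([set x; y] |: H).
Proof.
move=> fH nxy nc; have eH : [set x; y] \notin H by apply: contra nc => e; apply: cn_edge.
apply: forestI => g a b; rewrite in_setU1 => /orP[/eqP -> | gH] ge nab.
  rewrite setU1K //; case: (set2_eq nab (esym ge)) => [[-> ->]|[-> ->]] //.
  by rewrite cn_sym.
have gne : g != [set x; y] by apply: contraNneq eH => <-.
have -> : ([set x; y] |: H) :\ g = [set x; y] |: (H :\ g).
  apply/setP=> z; rewrite !inE.
  by case: (eqVneq z [set x; y]) => [->|] //=; rewrite eq_sym gne.
apply/negP=> /add_edge c.
have nH := forestE fH gH ge nab.
have sH : H :\ g \subset H by apply: subsetDl.
have abH : cn H a b by apply: cn_edge => //; rewrite -ge.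
case: c => [c|[[c1 c2]|[c1 c2]]]; first by rewrite c in nH.
  move/negP: nc; apply; apply: (cn_trans (y:=a)); first by rewrite cn_sym; apply: (cn_mono sH c1).
  by apply: (cn_trans abH); rewrite cn_sym; apply: (cn_mono sH c2).
move/negP: nc; apply; rewrite cn_sym; apply: (cn_trans (y:=a)); first by rewrite cn_sym; apply: (cn_mono sH c1).
by apply: (cn_trans abH); rewrite cn_sym; apply: (cn_mono sH c2).
Qed.

Lemma crit_edge H x y (B : {set {set V}}) : forest H -> pairs H -> B \subset H -> cn H x y ->
  ~~ cn (H :\: B) x y -> exists2 f, f \in B & ~~ cn (H :\ f) x y.
Proof.
move=> forH pH; have [n] := ubnP #|B|; elim: n B => [|n IH] B szB sBH c nc.
  by rewrite ltn0 in szB.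
have [f fB] : exists f, f \in B.
  apply/set0Pn; apply: contraNneq nc => B0; by rewrite B0 setD0.
have fH : f \in H by apply: (subsetP sBH).
have [c'|nc'] := boolP (cn (H :\: (B :\ f)) x y).
  exists f => //.
  have [u [v [nuv fe]]] := pH f fH.
  have eq1 : H :\: (B :\ f) = [set u; v] |: (H :\: B).
    apply/setP=> z; rewrite !inE -fe; case: (eqVneq z f) => [->|]; first by rewrite fH.
    by [].
  rewrite eq1 in c'; case/add_edge: c' => [c'|[[c1 c2]|[c1 c2]]]; first by rewrite c' in nc.
  - have sK : H :\: B \subset H :\ f by apply: setDS; rewrite sub1set.
    apply/negP=> cf; move/negP: (forestE forH fH fe nuv); apply.
    apply: (cn_trans (y:=x)); first by rewrite cn_sym; apply: (cn_mono sK c1).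
    by apply: (cn_trans cf); rewrite cn_sym; apply: (cn_mono sK c2).
  - have sK : H :\: B \subset H :\ f by apply: setDS; rewrite sub1set.
    apply/negP=> cf; move/negP: (forestE forH fH fe nuv); apply.
    apply: (cn_trans (y:=y)); first by apply: (cn_mono sK c2).
    by rewrite cn_sym in cf; apply: (cn_trans cf); apply: (cn_mono sK c1).
have szB' : #|B :\ f| < n by rewrite (cardsD1 f B) fB in szB.
have [f' f'B nc''] := IH (B :\ f) szB' (subset_trans (subsetDl _ _) sBH) c nc'.
by exists f' => //; move: f'B; rewrite inE => /andP[].
Qed.


Definition cl H x := [set y | cn H x y].
Definition comps H := #|[set cl H x | x in [set: V]]|.

Lemma cl_eq H a b : cn H a b -> cl H a = cl H b.
Proof.
move=> c; apply/setP=> z; rewrite !inE; apply/idP/idP => h.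
  by apply: cn_trans h; rewrite cn_sym.
exact: cn_trans h.
Qed.

Lemma comps_lt K (K' : {set {set V}}) a b : (forall u v, cn K u v -> cn K' u v) -> cn K' a b -> ~~ cn K a b ->
  comps K' < comps K.
Proof.
move=> sub c' nc.
pose phi (S : {set V}) := \bigcup_(z in S) cl K' z.
have phiE x : phi (cl K x) = cl K' x.
  apply/setP=> z; apply/bigcupP/idP.
    by case=> w; rewrite inE => /sub /cl_eq ->.
  by move=> h; exists x; rewrite // inE; apply: connect0.
rewrite /comps; have -> : [set cl K' x | x in [set: V]] = phi @: [set cl K x | x in [set: V]].
  by rewrite -imset_comp; apply: eq_imset => x /=; rewrite phiE.
rewrite ltn_neqAle leq_imset_card andbT.
apply/negP=> /imset_injP inj.
have ab : cl K a = cl K b.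
  apply: inj; rewrite ?imset_f ?inE //.
  by rewrite !phiE; apply: cl_eq.
move/negP: nc; apply; have : b \in cl K b by rewrite inE; apply: connect0.
by rewrite -ab inE.
Qed.

Lemma comps_eq K (K' : {set {set V}}) : (forall u v, cn K u v = cn K' u v) -> comps K = comps K'.
Proof.
move=> e; rewrite /comps.
suff -> : [set cl K x | x in [set: V]] = [set cl K' x | x in [set: V]] by [].
apply: eq_imset => x.
by apply/setP=> z; rewrite !inE e.
Qed.

Lemma forest_count F (F' : {set {set V}}) : forest F -> pairs F -> F' \subset F ->
  #|F :\: F'| + comps F <= comps F'.
Proof.
move=> fF pF; have [n] := ubnP #|F :\: F'|; elim: n F' => [|n IH] F' szD sF.
  by rewrite ltn0 in szD.
case: (eqVneq (F :\: F') set0) => [D0|/set0Pn [g gD]].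
  have -> : F' = F by apply/eqP; rewrite eqEsubset sF /= -setD_eq0 D0.
  by rewrite setDv cards0.
move: (gD); rewrite inE => /andP[gF' gF].
have sF'' : g |: F' \subset F by rewrite subUset sub1set gF sF.
have eqD : F :\: (g |: F') = (F :\: F') :\ g.
  by apply/setP=> z; rewrite !inE; case: (z == g).
have szD' : #|F :\: (g |: F')| < n by rewrite eqD; rewrite (cardsD1 g) gD in szD.
have := IH _ szD' sF''; rewrite eqD => h.
have [a [b [nab ge]]] := pF g gF.
have lt : comps (g |: F') < comps F'.
  apply: (@comps_lt F' (g |: F') a b).
  - by move=> u v; apply: cn_mono; apply: subsetUr.
  - by apply: cn_edge; rewrite // -ge setU11.
  apply/negP => c; move/negP: (forestE fF gF ge nab); apply; apply: cn_mono c.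
  by apply/subsetP=> z zF'; rewrite !inE (subsetP sF _ zF') andbT; apply: contraNneq gF' => <-.
by rewrite (cardsD1 g) gD; move: h lt; rewrite add1n; lia.
Qed.

End Graph.

Section Main.
Variable V : finType.
Variable E : {set {set V}}.
Hypothesis sE : simple_graph E.
Variable k : nat.

Local Notation T := {ffun 'I_k -> {set {set V}}}.
Implicit Types (F G : T) (x y a b u v : V) (H S : {set {set V}}) (i : 'I_k).

Lemma pairsE : pairs E.
Proof. by move=> g /sE /eqP /cards2P. Qed.

Lemma pairs_sub H : H \subset E -> pairs H.
Proof. by move=> sH g /(subsetP sH) /pairsE. Qed.

Definition valid F : bool :=
  [forall i, (F i \subset E) && forest (F i)] &&
  [forall e, forall i, forall j, ((e \in F i) && (e \in F j)) ==> (i == j)].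

Lemma validP F : reflect ((forall i, F i \subset E) /\ (forall i, forest (F i)) /\
   (forall e i j, e \in F i -> e \in F j -> i = j)) (valid F).
Proof.
apply: (iffP andP) => [[/forallP h1 /forallP h2]|[h1 [h2 h3]]].
  split; first by move=> i; case/andP: (h1 i).
  split; first by move=> i; case/andP: (h1 i).
  move=> e i j ei ej; move/forallP/(_ i)/forallP/(_ j): (h2 e).
  by rewrite ei ej => /eqP.
split; first by apply/forallP=> i; rewrite h1 h2.
apply/forallP=> e; apply/forallP=> i; apply/forallP=> j; apply/implyP=> /andP[ei ej].
by rewrite (h3 e i j).
Qed.

Definition total F := \sum_i #|F i|.
Definition uncov F e := [forall i, e \notin F i].
Definition upd F i S : T := [ffun j => if j == i then S else F j].

Lemma total_upd F i S : total (upd F i S) + #|F i| = total F + #|S|.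
Proof.
rewrite /total (bigD1 i) //= [X in _ = X + _](bigD1 i) //= ffunE eqxx.
rewrite (eq_bigr (fun j => #|F j|)) => [|j nj]; last by rewrite ffunE (negbTE nj).
move: (\sum_(j | j != i) #|F j|) => s. lia.
Qed.

Lemma valid_upd F i S : valid F -> S \subset E -> forest S ->
  (forall e j, j != i -> e \in S -> e \notin F j) -> valid (upd F i S).
Proof.
move=> /validP[h1 [h2 h3]] sS fS dS; apply/validP; split; [|split].
- by move=> j; rewrite ffunE; case: (j == i).
- by move=> j; rewrite ffunE; case: (j == i).
move=> e j j'; rewrite !ffunE.
case: (eqVneq j i) => [->|nj]; case: (eqVneq j' i) => [->|nj'] //.
- by move=> eS ej'; move: (dS e j' nj' eS); rewrite ej'.
- by move=> ej eS; move: (dS e j nj eS); rewrite ej.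
- exact: h3.
Qed.

Definition step F F' : bool := [exists i, exists x, exists y, exists f,
  (x != y) && ([set x; y] \in E) && uncov F [set x; y] && (f \in F i) &&
  ~~ cn (F i :\ f) x y && (F' == upd F i ([set x; y] |: (F i :\ f)))].

Lemma uncovP F e : reflect (forall i, e \notin F i) (uncov F e).
Proof. exact: forallP. Qed.

Lemma step_valid F F' : valid F -> step F F' -> valid F' /\ total F' = total F.
Proof.
move=> vF /existsP[i /existsP[x /existsP[y /existsP[f]]]].
case/andP=> /andP[/andP[/andP[/andP[nxy eE] /uncovP un] fi] nc] /eqP ->.
have [h1 [h2 h3]] := validP _ vF.
have nxyF : [set x; y] \notin F i :\ f by rewrite inE negb_and un orbT.
split.
  apply: valid_upd => //.
  - by rewrite subUset sub1set eE (subset_trans (subsetDl _ _) (h1 i)).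
  - by apply: forest_add => //; apply: (forest_sub (subsetDl _ _) (h2 i)).
  move=> e j nj; rewrite in_setU1 => /orP[/eqP ->|]; first exact: un.
  rewrite inE => /andP[_ ei]; apply/negP=> ej; move/eqP: nj; apply.
  by apply: (h3 e).
have := total_upd F i ([set x; y] |: (F i :\ f)).
rewrite cardsU1 nxyF (cardsD1 f (F i)) fi; lia.
Qed.

Definition Fe : T := [ffun _ => set0].

Lemma valid_Fe : valid Fe.
Proof.
apply/validP; split; [|split].
- by move=> i; rewrite ffunE sub0set.
- by move=> i; rewrite ffunE; apply: forestI => g a b; rewrite inE.
- by move=> e i j; rewrite ffunE inE.
Qed.

Definition F0 : T := [arg max_(F > Fe | valid F) total F].

Lemma F0P : valid F0 /\ forall F, valid F -> total F <= total F0.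
Proof. by rewrite /F0; case: arg_maxnP => [|F vF mF]; [exact: valid_Fe|]. Qed.

Definition reach F := connect step F0 F.

Lemma reach_inv F : reach F -> valid F /\ total F = total F0.
Proof.
apply: (@cn_ind _ _ (fun F => valid F /\ total F = total F0)).
  by split=> //; case: F0P.
by move=> G G' [vG tG] st; have [? ?] := step_valid vG st; split=> //; lia.
Qed.

Lemma maxspan F i x y : valid F -> (forall G, valid G -> total G <= total F) ->
  [set x; y] \in E -> x != y -> uncov F [set x; y] -> cn (F i) x y.
Proof.
move=> vF mF eE nxy /uncovP un; apply/negPn/negP => nc.
have [h1 [h2 h3]] := validP _ vF.
have vG : valid (upd F i ([set x; y] |: F i)).
  apply: valid_upd => //.
  - by rewrite subUset sub1set eE h1.
  - exact: forest_add.
  move=> e j nj; rewrite in_setU1 => /orP[/eqP ->|ei]; first exact: un.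
  apply/negP=> ej; move/eqP: nj; apply; exact: (h3 e).
have := mF _ vG; have := total_upd F i ([set x; y] |: F i).
rewrite cardsU1 (negbTE (un i)); lia.
Qed.


Lemma reach_max F : reach F -> forall G, valid G -> total G <= total F.
Proof. by move=> /reach_inv[_ ->]; case: F0P. Qed.

Fact Ehat_key : unit. Proof. by []. Qed.
Definition Ehat := locked_with Ehat_key [set e in E | [exists F, reach F && uncov F e]].

Lemma EhatE e : (e \in Ehat) = (e \in E) && [exists F, reach F && uncov F e].
Proof. by rewrite /Ehat locked_withE inE. Qed.

Lemma EhatI F e : reach F -> e \in E -> uncov F e -> e \in Ehat.
Proof. by move=> rF eE un; rewrite EhatE eE; apply/existsP; exists F; rewrite rF. Qed.

Lemma step3 F i x y : reach F -> [set x; y] \in E -> x != y -> uncov F [set x; y] ->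
  cn (F i :&: Ehat) x y.
Proof.
move=> rF eE nxy un; have [vF _] := reach_inv rF.
have [h1 [h2 h3]] := validP _ vF.
have c := maxspan i vF (reach_max rF) eE nxy un.
apply/negPn/negP => nc.
have nc' : ~~ cn (F i :\: (F i :\: Ehat)) x y by rewrite setDDr setDv set0U.
have [f] := crit_edge (h2 i) (pairs_sub (h1 i)) (subsetDl _ _) c nc'.
rewrite inE => /andP[fnE fi] ncf.
have st : step F (upd F i ([set x; y] |: (F i :\ f))).
  apply/existsP; exists i; apply/existsP; exists x; apply/existsP; exists y; apply/existsP; exists f.
  by rewrite nxy eE un fi ncf eqxx.
have rF' : reach (upd F i ([set x; y] |: (F i :\ f))) by apply: connect_trans rF (connect1 st).
move/negP: fnE; apply; apply: (EhatI rF'); first exact: (subsetP (h1 i)).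
apply/uncovP=> j; rewrite /upd ffunE; case: (eqVneq j i) => [_|nj].
  rewrite !inE eqxx /= orbF; apply/negP=> /eqP fe.
  by move/uncovP/(_ i): un; rewrite -fe fi.
by apply/negP=> fj; move/eqP: nj; apply; apply: (h3 f).
Qed.

Lemma step4 F F' : reach F -> step F F' ->
  forall j u v, cn (F' j :&: Ehat) u v = cn (F j :&: Ehat) u v.
Proof.
move=> rF st; have rF' : reach F' by apply: connect_trans rF (connect1 st).
have [vF _] := reach_inv rF; have [h1 [h2 h3]] := validP _ vF.
move: st => /existsP[i /existsP[x /existsP[y /existsP[f]]]].
case/andP=> /andP[/andP[/andP[/andP[nxy eE] un] fi] nc] /eqP eF'.
move=> j u v; rewrite eF' /upd ffunE; case: (eqVneq j i) => [->|//].
have eH : [set x; y] \in Ehat by apply: (EhatI rF).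
have fH : f \in Ehat.
  apply: (EhatI rF'); first exact: (subsetP (h1 i)).
  apply/uncovP=> j'; rewrite eF' /upd ffunE; case: (eqVneq j' i) => [_|nj].
    rewrite !inE eqxx /= orbF; apply/negP=> /eqP fe.
    by move/uncovP/(_ i): un; rewrite -fe fi.
  by apply/negP=> fj; move/eqP: nj; apply; apply: (h3 f).
have cxy := step3 i rF eE nxy un.
apply/idP/idP; apply: connect_sub => a b /andP[nab].
  rewrite !inE => /andP[/orP[/eqP e2|/andP[nf ei]] eh].
    by case: (set2_eq nab e2) => [[-> ->]|[-> ->]]; [exact: cxy | move: cxy; rewrite cn_sym].
  by apply: cn_edge; rewrite // !inE ei eh.
rewrite !inE => /andP[ei eh].
case: (eqVneq [set a; b] f) => [fe|nf]; last first.
  by apply: cn_edge; rewrite // !inE nf ei eh orbT.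
have fHH : f \in F i :&: Ehat by rewrite inE fi fH.
rewrite -(setD1K fHH) -{1}fe in cxy.
have sK : (F i :&: Ehat) :\ f \subset ([set x; y] |: F i :\ f) :&: Ehat.
  by apply/subsetP=> z; rewrite !inE => /andP[-> /andP[-> ->]]; rewrite orbT.
have exy : cn (([set x; y] |: F i :\ f) :&: Ehat) x y.
  by apply: cn_edge; rewrite // !inE eqxx eH.
have sK2 : (F i :&: Ehat) :\ f \subset F i :\ f.
  by apply/subsetP=> z; rewrite !inE => /andP[-> /andP[-> _]].
case/add_edge: cxy => [c|[[c1 c2]|[c1 c2]]].
- by rewrite (cn_mono sK2 c) in nc.
- have e1 : cn (([set x; y] |: F i :\ f) :&: Ehat) a x by rewrite cn_sym; apply: (cn_mono sK c1).
  have e2 : cn (([set x; y] |: F i :\ f) :&: Ehat) y b by rewrite cn_sym; apply: (cn_mono sK c2).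
  exact: (cn_trans (cn_trans e1 exy) e2).
- have e1 : cn (([set x; y] |: F i :\ f) :&: Ehat) a y by apply: (cn_mono sK c2).
  have e2 : cn (([set x; y] |: F i :\ f) :&: Ehat) x b by apply: (cn_mono sK c1).
  by rewrite cn_sym in exy; exact: (cn_trans (cn_trans e1 exy) e2).
Qed.

Lemma reach_cn F : reach F -> forall j u v, cn (F j :&: Ehat) u v = cn (F0 j :&: Ehat) u v.
Proof.
move=> rF; suff : reach F /\ (forall j u v, cn (F j :&: Ehat) u v = cn (F0 j :&: Ehat) u v).
  by case.
apply: (@cn_ind _ _ (fun F => reach F /\ (forall j u v, cn (F j :&: Ehat) u v = cn (F0 j :&: Ehat) u v)) F0 _ _ F rF).
  by split=> //; apply: connect0.
move=> G G' [rG hG] st; split; first by apply: connect_trans rG (connect1 st).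
by move=> j u v; rewrite (step4 rG st) hG.
Qed.

Lemma Rcn j u v : cn Ehat u v = cn (F0 j :&: Ehat) u v.
Proof.
apply/idP/idP; last by apply: cn_mono; apply: subsetIr.
apply: connect_sub => a b /andP[nab].
rewrite EhatE => /andP[eE /existsP[F /andP[rF un]]].
by have := step3 j rF eE nab un; rewrite (reach_cn rF).
Qed.


Lemma card_bigcup_le (D : 'I_k -> {set {set V}}) : #|\bigcup_i D i| <= \sum_i #|D i|.
Proof.
elim/big_rec2: _ => [|i n S _ IH]; first by rewrite cards0.
by apply: leq_trans (leq_card_setU _ _) _; rewrite leq_add2l.
Qed.

Lemma bigmin_le (I : finType) (P : pred I) (Fn : I -> nat) (m : nat) (i : I) :
  P i -> \big[minn/m]_(j | P j) Fn j <= Fn i.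
Proof.
move=> Pi; change (\big[minn/m]_(j <- index_enum I | P j) Fn j <= Fn i).
have : i \in index_enum I by rewrite mem_index_enum.
elim: (index_enum I) => // j r IH; rewrite inE big_cons => /orP[/eqP<-|ir].
  by rewrite Pi geq_minl.
case: (P j); last exact: IH.
exact: leq_trans (geq_minr _ _) (IH ir).
Qed.

Lemma ec_le S : S \subset E -> ~~ connectedb (E :\: S) -> edge_conn E <= #|S|.
Proof.
move=> sS nc; rewrite /edge_conn; apply: (bigmin_le (fun S => #|S|)).
by rewrite powersetE sS nc.
Qed.

Lemma comps_ge1 H x : 0 < comps H.
Proof. by rewrite /comps card_gt0; apply/set0Pn; exists (cl H x); rewrite imset_f. Qed.

Lemma comps_ge2 H x y : ~~ cn H x y -> 1 < comps H.
Proof.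
move=> nc; rewrite /comps.
have ne : cl H x != cl H y.
  apply: contraNneq nc => e; have : y \in cl H y by rewrite inE; apply: connect0.
  by rewrite -e inE.
apply: leq_trans (subset_leq_card (_ : [set cl H x; cl H y] \subset _)).
  by rewrite cards2 ne.
by apply/subsetP=> X; rewrite !inE => /orP[]/eqP->; rewrite imset_f.
Qed.

Definition R := cn Ehat.
Definition cls := [set cl Ehat x | x in [set: V]].
Definition cross := [set g in E | [exists a, exists b, (g == [set a; b]) && ~~ R a b]].
Definition delta (X : {set V}) := [set g in cross | [exists z, (z \in X) && (z \in g)]].

Lemma cross_cov g : g \in cross -> exists2 i, g \in F0 i & g \notin Ehat.
Proof.
rewrite inE => /andP[gE /existsP[a /existsP[b /andP[/eqP ge nR]]]].
have anb : a != b by apply: contraNneq nR => ->; apply: connect0.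
have gnE : g \notin Ehat.
  by apply: contra nR => gH; rewrite /R; apply: cn_edge; rewrite -?ge.
have : ~~ uncov F0 g by apply: contra gnE => un; apply: (EhatI (connect0 _ _)).
by rewrite negb_forall => /existsP[i]; rewrite negbK => gi; exists i.
Qed.

Lemma count_upper i0 x0 y0 : ~~ cn (F0 i0) x0 y0 -> #|cross| + k.+1 <= k * comps Ehat.
Proof.
move=> nc; have [vF0 _] := F0P; have [h1 [h2 h3]] := validP _ vF0.
have hi i : #|F0 i :\: Ehat| + comps (F0 i) <= comps Ehat.
  rewrite (@comps_eq _ Ehat (F0 i :&: Ehat)); last by move=> u v; apply: Rcn.
  have := forest_count (h2 i) (pairs_sub (h1 i)) (subsetIl (F0 i) Ehat).
  suff -> : F0 i :\: (F0 i :&: Ehat) = F0 i :\: Ehat by [].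
  by apply/setP=> z; rewrite !inE; case: (z \in F0 i); rewrite ?andbF ?andbT.
have c1 : #|cross| <= \sum_i #|F0 i :\: Ehat|.
  apply: (leq_trans _ (card_bigcup_le (fun i => F0 i :\: Ehat))); apply: subset_leq_card; apply/subsetP=> g /cross_cov[i gi gn].
  by apply/bigcupP; exists i => //; rewrite inE gn gi.
have c2 : \sum_i (#|F0 i :\: Ehat| + comps (F0 i)) <= k * comps Ehat.
  apply: (leq_trans (_ : _ <= \sum_(i < k) comps Ehat)); first by apply: leq_sum => i _; exact: hi.
  by rewrite sum_nat_const card_ord.
have c3 : k.+1 <= \sum_i comps (F0 i).
  have s2 : \sum_(i < k) 1 = 1 + \sum_(i < k | i != i0) 1 by rewrite (bigD1 i0).
  rewrite sum_nat_const card_ord muln1 in s2.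
  rewrite (bigD1 i0) //=.
  apply: (leq_trans (_ : k.+1 <= 2 + \sum_(i < k | i != i0) 1)); first by move: s2; lia.
  apply: leq_add; first by apply: comps_ge2 nc.
  by apply: leq_sum => i _; apply: comps_ge1 x0.
move: c2; rewrite big_split /=; apply: leq_trans; exact: leq_add c1 c3.
Qed.

Lemma delta_big X : X \in cls -> 1 < comps Ehat -> k.*2 <= edge_conn E -> k.*2 <= #|delta X|.
Proof.
move=> /imsetP[x _ ->] r2 hk; apply: leq_trans hk _; apply: ec_le.
  by apply/subsetP=> g; rewrite !inE => /andP[/andP[]].
have [y ny] : exists y, ~~ R x y.
  apply/existsP; apply: contraLR r2; rewrite negb_exists => /forallP h.
  rewrite -leqNgt /comps; apply: leq_trans (subset_leq_card (_ : _ \subset [set cl Ehat x])) _.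
    apply/subsetP=> Y /imsetP[z _ ->]; rewrite inE; apply/eqP; apply: cl_eq.
    by rewrite cn_sym; have := h z; rewrite negbK.
  by rewrite cards1.
rewrite /connectedb negb_forall; apply/existsP; exists x; rewrite negb_forall; apply/existsP; exists y.
apply/negP=> c.
have : y \in cl Ehat x.
  apply: (@cn_ind _ _ (fun z => z \in cl Ehat x) x _ _ y c); first by rewrite inE; apply: connect0.
  move=> z w zX /andP[nzw]; rewrite inE => /andP[nd eE]; apply/negPn/negP => wX.
  move/negP: nd; apply; rewrite !inE eE /=; apply/andP; split.
    apply/existsP; exists z; apply/existsP; exists w; rewrite eqxx /=.
    apply: contra wX => Rzw; rewrite inE; apply: cn_trans Rzw; by rewrite inE in zX.
  by apply/existsP; exists z; rewrite zX !inE eqxx.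
by rewrite inE => h; move: ny; rewrite /R h.
Qed.

Lemma delta_sum : \sum_(X in cls) #|delta X| <= (#|cross|).*2.
Proof.
have e1 X : #|delta X| = \sum_(g in cross) (g \in delta X).
  rewrite -sum1_card (big_mkcond (fun g => g \in cross)) (big_mkcond (fun g => g \in delta X)) /=.
  apply: eq_bigr => g _; case: (boolP (g \in delta X)) => [gd|_]; last by case: (g \in cross).
  by move: (gd); rewrite inE => /andP[->].
rewrite (eq_bigr _ (fun X _ => e1 X)) exchange_big /= -muln2 -sum_nat_const.
apply: leq_sum => g; rewrite inE => /andP[gE /existsP[a /existsP[b /andP[/eqP ge _]]]].
have -> : \sum_(X in cls) (g \in delta X) = #|[set X in cls | g \in delta X]|.
  rewrite -sum1_card.
  rewrite [in RHS](big_mkcond (fun X => X \in [set X in cls | g \in delta X])) /=.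
  rewrite [in LHS](big_mkcond (fun X => X \in cls)) /=.
  apply: eq_bigr => X _; rewrite (_ : (X \in [set X in cls | g \in delta X]) = (X \in cls) && (g \in delta X)); last by rewrite inE.
  by case: (X \in cls); case: (g \in delta X).
apply: leq_trans (subset_leq_card (_ : _ \subset [set cl Ehat a; cl Ehat b])) _; last first.
  by rewrite cards2; case: (_ != _).
apply/subsetP=> X; rewrite !inE => /andP[/imsetP[z _ ->] /andP[_ /existsP[w /andP[wX wg]]]].
move: wg; rewrite ge !inE => /orP[]/eqP wab; subst w.
  by rewrite (@cl_eq _ Ehat z a) ?eqxx //; rewrite inE in wX.
by rewrite (@cl_eq _ Ehat z b) ?eqxx ?orbT //; rewrite inE in wX.
Qed.

Lemma F0_conn : k.*2 <= edge_conn E -> forall i, connectedb (F0 i).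
Proof.
move=> hk i0; apply/negPn/negP; rewrite negb_forall => /existsP[x0]; rewrite negb_forall.
move=> /existsP[y0 nc].
have cu := count_upper nc.
case: (leqP (comps Ehat) 1) => r2.
  have : k * comps Ehat <= k * 1 by rewrite leq_mul2l r2 orbT.
  lia.
have : (k * comps Ehat).*2 <= (#|cross|).*2.
  apply: leq_trans delta_sum; rewrite -mul2n mulnA mul2n mulnC -sum_nat_const.
  rewrite /comps -/cls; apply: leq_sum => X Xc; exact: delta_big.
rewrite leq_double; lia.
Qed.

End Main.

Lemma connectedb_mono (V : finType) (H K : {set {set V}}) :
  H \subset K -> connectedb H -> connectedb K.
Proof.
move=> sHK /forallP c; apply/forallP=> x; apply/forallP=> y.
by move/forallP/(_ y): (c x); apply: cn_mono.
Qed.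

Theorem mainTheorem10 (V : finType) (E : {set {set V}}) :
  simple_graph E -> 2 <= #|V| -> connectedb E ->
  2 ^ (edge_conn E)./2 <= m_code E.
Proof.
move=> sE hV _; set k := (edge_conn E)./2.
have hk : k.*2 <= edge_conn E by have := odd_double_half (edge_conn E); lia.
set F := F0 E k.
have cF := F0_conn sE hk; rewrite -/F in cF.
have [vF _] := F0P E k; rewrite -/F in vF.
have [h1 [h2 h3]] := validP _ _ vF.
have [x [y [_ _ nxy]]] : exists x y, [/\ x \in [set: V], y \in [set: V] & x != y].
  by apply/card_gt1P; rewrite cardsT.
have ne i : exists g, g \in F i.
  apply/set0Pn/negP => /eqP F0e; move/forallP/(_ x)/forallP/(_ y): (cF i).
  rewrite F0e => c; move/negP: nxy; apply; apply/eqP.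
  by apply: (@cn_ind _ _ (fun z => x = z) x _ _ y c) => // b c' _; rewrite /adj inE andbF.
pose U (S : {set 'I_k}) := \bigcup_(i in S) F i.
have sub S S' : U S \subset U S' -> S \subset S'.
  move=> sU; apply/subsetP=> i iS; have [g gi] := ne i.
  have : g \in U S' by apply: (subsetP sU); apply/bigcupP; exists i.
  by case/bigcupP=> j jS' gj; rewrite (h3 g i j gi gj).
have notin (S : {set 'I_k}) i : i \notin S -> forall g, g \in F i -> g \notin U S.
  move=> niS g gi; apply/negP=> /bigcupP[j jS gj].
  by move: niS; rewrite (h3 g i j gi gj) jS.
have UE (S : {set 'I_k}) : U S \subset E by apply/bigcupsP=> i _; apply: h1.
have sym (S S' : {set 'I_k}) : symdiff (U S) (U S') = symdiff (U S') (U S) by rewrite /symdiff setUC.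
have key (S S' : {set 'I_k}) i : i \in S -> i \notin S' -> connectedb (symdiff (U S) (U S')).
  move=> iS niS'; apply: connectedb_mono (cF i); apply/subsetP=> g gi.
  rewrite /symdiff !inE (notin _ _ niS' _ gi) /=; apply/orP; left.
  by apply/bigcupP; exists i.
pose C := [set U S | S in powerset [set: 'I_k]].
have cC : conn_code E C.
  apply/andP; split.
    by apply/forall_inP=> X /imsetP[S _ ->].
  apply/forall_inP=> X /imsetP[S _ ->]; apply/forall_inP=> Y /imsetP[S' _ ->].
  apply/implyP=> nU.
  have nS : S != S' by apply: contraNneq nU => ->.
  case: (boolP (S \subset S')) => sS.
    have : ~~ (S' \subset S) by apply: contra nS => sS'; rewrite eqEsubset sS sS'.
    case/subsetPn=> i iS' niS; rewrite sym; exact: key iS' niS.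
  case/subsetPn: sS => i iS niS'; exact: key iS niS'.
have cardC : #|C| = 2 ^ k.
  rewrite card_in_imset ?card_powerset ?cardsT ?card_ord //.
  move=> S S' _ _ eU; apply/eqP; rewrite eqEsubset !sub //; by rewrite eU.
rewrite -cardC /m_code; exact: (@leq_bigmax_cond _ (conn_code E) (fun C => #|C|) C cC).
Qed.
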